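(* Let $\mathcal{D}=\{(\mathbf{x}_i,y_i)\}_{i=1}^n$ be a training set, $f(\mathbf{x};\mathbf{w})$ a model, $\ell$ a loss, and $\mathcal{L}(\mathcal{D};\mathbf{w})=\frac{1}{n}\sum_{i=1}^n\ell(f(\mathbf{x}_i;\mathbf{w}),y_i)$. Assume $\mathcal{L}(\mathcal{D};\cdot)$ is $\beta$-smooth, i.e. $\|\nabla\mathcal{L}(\mathcal{D};\mathbf{w})-\nabla\mathcal{L}(\mathcal{D};\mathbf{v})\|\le\beta\|\mathbf{w}-\mathbf{v}\|$. Consider an algorithm $\mathcal{A}$ with full-batch gradients: for $t=0,\dots,T-1$, with $\xi_t\in\{0,1\}$ indicating whether iteration $t$ uses a SAM update, $$\mathbf{w}_{t+1}=\mathbf{w}_t-\eta\Big((1-\xi_t)\nabla\mathcal{L}(\mathcal{D};\mathbf{w}_t)+\xi_t\nabla\mathcal{L}\big(\mathcal{D};\mathbf{w}_t+\rho\nabla\mathcal{L}(\mathcal{D};\mathbf{w}_t)\big)\Big).$$ If $\rho<\frac{1}{2\beta}$ and $\eta<\frac{1}{\beta}$, then $$\min_{0\le t\le T-1}\|\nabla\mathcal{L}(\mathcal{D};\mathbf{w}_t)\|^2\le\frac{\mathcal{L}(\mathcal{D};\mathbf{w}_0)-\mathcal{L}(\mathcal{D};\mathbf{w}_T)}{T\eta\left(1-\frac{\beta\eta}{2}-\beta\rho\zeta\right)},$$ where $\zeta=\frac{1}{T}\sum_{t=0}^{T-1}\xi_t\in[0,1]$.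
   Context: $\eta>0$ is the stepsize and $\rho>0$ the SAM perturbation radius; the rule choosing $\xi_t$ is arbitrary. *)

(* Defs.v *)
From HB Require Import structures.
From mathcomp Require Import all_boot all_order all_algebra.
From mathcomp Require Import all_classical all_reals all_analysis.
Set Implicit Arguments. Unset Strict Implicit. Unset Printing Implicit Defensive.
Import Order.TTheory GRing.Theory Num.Theory.
Import numFieldNormedType.Exports.
Local Open Scope ring_scope.

(* Euclidean inner product and Euclidean norm on R^d (the library's norm on
   matrices is the max norm, so we define the Euclidean one explicitly). *)
Definition dotv {R : realType} {d : nat} (u v : 'rV[R]_d) : R :=
  \sum_(i < d) u ord0 i * v ord0 i.
Definition enorm {R : realType} {d : nat} (u : 'rV[R]_d) : R :=
  Num.sqrt (dotv u u).

Definition emp_loss {R : realType} {d n : nat} {X Y O : Type}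
  (f : X -> 'rV[R]_d -> O) (ell : O -> Y -> R) (D : 'I_n -> X * Y)
  (w : 'rV[R]_d) : R :=
  n%:R^-1 * \sum_(i < n) ell (f (D i).1 w) (D i).2.

Definition is_gradient {R : realType} {d : nat}
  (L : 'rV[R]_d -> R) (g : 'rV[R]_d -> 'rV[R]_d) : Prop :=
  forall w, differentiable L w /\ forall v, 'd L w v = dotv (g w) v.

Definition smooth {R : realType} {d : nat} (beta : R)
  (g : 'rV[R]_d -> 'rV[R]_d) : Prop :=
  forall w v, enorm (g w - g v) <= beta * enorm (w - v).

(* Main.v *)
Require Import Defs.
From HB Require Import structures.
From mathcomp Require Import all_boot all_order all_algebra.
From mathcomp Require Import all_classical all_reals all_analysis.
From mathcomp Require Import ring lra.
Import Order.TTheory GRing.Theory Num.Theory.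
Import numFieldNormedType.Exports.
Local Open Scope ring_scope.


Section Dot.
Context {R : realType} {d : nat}.
Implicit Types (u v z : 'rV[R]_d).

Lemma dotvC u v : dotv u v = dotv v u.
Proof. by apply: eq_bigr => i _; rewrite mulrC. Qed.

Lemma dotvDl u v z : dotv (u + v) z = dotv u z + dotv v z.
Proof. by rewrite /dotv -big_split; apply: eq_bigr => i _; rewrite mxE mulrDl. Qed.

Lemma dotvZl (a : R) u z : dotv (a *: u) z = a * dotv u z.
Proof. by rewrite /dotv mulr_sumr; apply: eq_bigr => i _; rewrite mxE mulrA. Qed.

Lemma dotvNl u z : dotv (- u) z = - dotv u z.
Proof. by rewrite -scaleN1r dotvZl mulN1r. Qed.

Lemma dotvBl u v z : dotv (u - v) z = dotv u z - dotv v z.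
Proof. by rewrite dotvDl dotvNl. Qed.

Lemma dotvDr u v z : dotv z (u + v) = dotv z u + dotv z v.
Proof. by rewrite dotvC dotvDl !(dotvC z). Qed.
Lemma dotvZr (a : R) u z : dotv z (a *: u) = a * dotv z u.
Proof. by rewrite dotvC dotvZl dotvC. Qed.
Lemma dotvNr u z : dotv z (- u) = - dotv z u.
Proof. by rewrite dotvC dotvNl dotvC. Qed.
Lemma dotvBr u v z : dotv z (u - v) = dotv z u - dotv z v.
Proof. by rewrite dotvDr dotvNr. Qed.

Lemma dotv_ge0 u : 0 <= dotv u u.
Proof. by apply: sumr_ge0 => i _; rewrite -expr2 sqr_ge0. Qed.

Lemma enorm_sqr u : enorm u ^+ 2 = dotv u u.
Proof. by rewrite /enorm sqr_sqrtr // dotv_ge0. Qed.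

Lemma amgm (lam : R) u v : 2 * lam * dotv u v <= dotv u u + lam ^+ 2 * dotv v v.
Proof.
have := dotv_ge0 (u - lam *: v).
rewrite !dotvBl !dotvBr !dotvZl !dotvZr (dotvC v u).
set a := dotv u u; set b := dotv u v; set c := dotv v v.
move=> H; nra.
Qed.

Lemma amgmN (lam : R) u v : - (2 * lam * dotv u v) <= dotv u u + lam ^+ 2 * dotv v v.
Proof.
have := amgm lam u (- v). by rewrite dotvNr dotvNr dotvNl opprK mulrN.
Qed.

Lemma smooth_sq beta (g : 'rV[R]_d -> 'rV[R]_d) : smooth beta g ->
  forall w v, dotv (g w - g v) (g w - g v) <= beta ^+ 2 * dotv (w - v) (w - v).
Proof.
move=> sm w v; rewrite -!enorm_sqr -exprMn.
have h0 : 0 <= enorm (g w - g v) by rewrite /enorm sqrtr_ge0.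
by rewrite ler_pXn2r // ?nnegrE // (le_trans h0 (sm w v)).
Qed.

End Dot.

Lemma algR (R : realType) (k : R) : k%:A = k.
Proof. by rewrite /GRing.scale /= mulr1. Qed.
Lemma scaleR (R : realType) (k x : R) : (k *: x) = k * x.
Proof. by []. Qed.

Lemma descent (R : realType) (d : nat) (L : 'rV[R]_d -> R) g (beta : R) :
  is_gradient L g -> 0 < beta -> smooth beta g ->
  forall w u, L (w + u) <= L w + dotv (g w) u + beta / 2 * dotv u u.
Proof.
move=> gr bpos sm w u.
pose h := fun s : R => s *: u + w.
pose phi := L \o h.
have hdiff : forall s, is_diff s h (fun z : R => z *: u).
  move=> s; rewrite /h.
  have -> : (fun z : R => z *: u) = (fun z : R => z *: u) + 0 by rewrite addr0.
  exact: is_diffD.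
have phider : forall s : R, is_derive s (1:R) phi (dotv (g (h s)) u).
  move=> s; have [dL dLv] := gr (h s).
  have [hd hdv] := hdiff s.
  have dphi : differentiable phi s by apply: differentiable_comp.
  apply: DeriveDef; first exact: diff_derivable.
  by rewrite deriveE // /phi diff_comp // hdv /= dLv scale1r.
pose c1 := dotv (g w) u.
pose c2 := beta / 2 * dotv u u.
have := fun s : R => is_deriveB (is_deriveB (phider s) (is_deriveZ c1 (@is_derive_id _ R s 1))) (is_deriveZ c2 (is_deriveX 2 (@is_derive_id _ R s 1))).
move=> H.
pose psi : R -> R := fun s => L (s *: u + w) - c1 * s - c2 * s ^+ 2.
have psiE : (phi - c1 \*: idfun - c2 \*: (idfun ^+ 2)) = psi.
  by apply/funext => s.
rewrite psiE in H.
have psid : forall x : R, derivable psi x 1 by move=> x; by case: (H x).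
have mono := @ler0_derive1_nincr R psi 0 1 (fun x _ => psid x) _ _ 0 1 (lexx _) ler01 (lexx _).
have : psi 1 <= psi 0.
  apply: mono.
  - move=> x; rewrite in_itv /= => /andP [x0 x1].
    rewrite derive1E derive_val /= /h.
    set a := g (x *: u + w) - g w.
    have Ha : dotv a a <= beta ^+ 2 * (x * (x * dotv u u)).
      have := @smooth_sq _ _ _ _ sm (x *: u + w) w.
      by rewrite addrK dotvZl dotvZr.
    have Hm := amgm (beta * x) a u.
    have Hda : dotv a u = dotv (g (x *: u + w)) u - c1 by rewrite /a dotvBl.
    have bx : 0 < beta * x by apply: mulr_gt0.
    rewrite /c1 /c2 in Hda *.
    rewrite -/(dotv (g w) u) in Hda.
    set X := dotv (g (x *: u + w)) u in Hda *.
    set Y := dotv (g w) u in Hda *.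
    set N := dotv u u in Ha *.
    set Na := dotv a a in Ha Hm.
    rewrite Hda in Hm.
    have N0 : 0 <= N by apply: dotv_ge0.
    rewrite /= !algR !scaleR expr1.
    have E : beta / 2 * N * (2 * x) = beta * x * N.
      by field.
    have K : 2 * (beta * x) * (X - Y) <= 2 * (beta * x) * (beta * x * N).
      apply: (le_trans Hm).
      rewrite (_ : 2 * (beta * x) * (beta * x * N) = beta ^+ 2 * (x * (x * N)) + (beta * x) ^+ 2 * N); last by ring.
      by rewrite lerD2r.
    rewrite ler_pM2l ?mulr_gt0 // in K.
    by rewrite E subr_le0.
  - apply: continuous_subspaceT => x; apply: differentiable_continuous.
    exact/derivable1_diffP.
rewrite /psi scale1r scale0r add0r (addrC u w) !mulr1 expr1n mulr1 mulr0 subr0.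
rewrite expr0n /= mulr0 subr0 -/c1 -/c2 => Hf.
by rewrite -addrA -lerBlDr opprD addrA.
Qed.

Lemma alg1 (R: realType) (beta eta rho G P E Y : R) :
 0 < beta -> 0 < eta -> 0 < rho -> beta * rho < 2^-1 -> beta * eta < 1 -> 0 <= G ->
 E <= beta ^+ 2 * (rho * (rho * G)) -> - (2 * (beta * rho) * P) <= E + (beta * rho) ^+ 2 * G ->
 Y - eta * (G + P) + beta / 2 * - - (eta * (eta * (G + P + (P + E)))) <=
 Y - eta * (1 - beta * eta / 2 - beta * rho * 1) * G.
Proof.
move=> bp ep rp hr ha hG hE hm.
have r0 : 0 < beta * rho by apply: mulr_gt0.
have a0 : 0 < beta * eta by apply: mulr_gt0.
rewrite -subr_le0.
have -> : Y - eta * (G + P) + beta / 2 * - - (eta * (eta * (G + P + (P + E)))) -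
   (Y - eta * (1 - beta * eta / 2 - beta * rho * 1) * G)
   = eta * (- (1 - beta * eta) * P + (beta * eta) / 2 * E - (beta * rho) * G).
  by field.
apply: mulr_ge0_le0; first exact: ltW.
move: hr ha hE hm r0 a0.
have -> : beta ^+ 2 * (rho * (rho * G)) = (beta * rho) ^+ 2 * G by ring.
move: (beta * rho) (beta * eta) => r a hr ha hE hm r0 a0.
have Pn : - P <= r * G by nra.
have h1 : 0 <= r * G by nra.
have h2 : (1 - a) * (- P) <= (1 - a) * (r * G) by nra.
have h3 : a * E <= a * (r ^+ 2 * G) by nra.
have h4 : 0 <= a * r * G by nra.
nra.
Qed.

Lemma step (R : realType) (d : nat) (L : 'rV[R]_d -> R) g (beta eta rho : R) (b : bool) (w : 'rV[R]_d) :
  is_gradient L g -> 0 < beta -> smooth beta g -> 0 < eta -> 0 < rho ->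
  rho < (2 * beta)^-1 -> eta < beta^-1 ->
  L (w - eta *: ((1 - b%:R) *: g w + b%:R *: g (w + rho *: g w)))
  <= L w - eta * (1 - beta * eta / 2 - beta * rho * b%:R) * dotv (g w) (g w).
Proof.
move=> gr bpos sm epos rpos hr he.
have bne : beta != 0 by rewrite gt_eqF.
have r2 : beta * rho < 2^-1.
  have : beta * rho < beta * (2 * beta)^-1 by rewrite ltr_pM2l.
  by rewrite invfM mulrCA mulfV ?mulr1.
have a1 : beta * eta < 1.
  have : beta * eta < beta * beta^-1 by rewrite ltr_pM2l.
  by rewrite mulfV.
case: b => /=.
- rewrite subrr scale0r add0r scale1r.
  set h := g (w + rho *: g w).
  have := @descent _ _ _ _ _ gr bpos sm w (- (eta *: h)).
  set gg := g w.
  have -> : h = gg + (h - gg) by rewrite addrC subrK.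
  set e := h - gg.
  have He : dotv e e <= beta ^+ 2 * (rho * (rho * dotv gg gg)).
    have := @smooth_sq _ _ _ _ sm (w + rho *: gg) w; rewrite [w + _ - w]addrAC subrr add0r dotvZl dotvZr.
    by move=> H; exact: H.
  clearbody e.
  have Hm := amgmN (beta * rho) e gg.
  rewrite ?dotvNr ?dotvNl ?dotvZr ?dotvZl ?dotvDr ?dotvDl ?(dotvC e gg) in Hm *.
  move=> H; apply: (le_trans H); apply: alg1 => //; exact: dotv_ge0.
- rewrite subr0 scale1r scale0r addr0.
  have := @descent _ _ _ _ _ gr bpos sm w (- (eta *: g w)).
  rewrite !dotvNr !dotvNl !dotvZr !dotvZl opprK mulr0 subr0.
  set G := dotv (g w) (g w); set X := L _; set Y := L w.
  move=> H; apply: (le_trans H).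
  rewrite le_eqVlt; apply/orP; left; apply/eqP; ring.
Qed.

Theorem theorem2 (R : realType) (d n : nat) (X Y O : Type)
  (f : X -> 'rV[R]_d -> O) (ell : O -> Y -> R) (D : 'I_n -> X * Y)
  (g : 'rV[R]_d -> 'rV[R]_d) (beta eta rho : R) (T : nat)
  (xi : nat -> bool) (w : nat -> 'rV[R]_d) :
  is_gradient (emp_loss f ell D) g ->
  0 < beta -> smooth beta g ->
  0 < eta -> 0 < rho ->
  rho < (2 * beta)^-1 -> eta < beta^-1 ->
  (forall t, w t.+1 = w t - eta *:
     ((1 - (xi t)%:R) *: g (w t) + (xi t)%:R *: g (w t + rho *: g (w t)))) ->
  (0 < T)%N ->
  let zeta := T%:R^-1 * \sum_(t < T) (xi t)%:R in
  \big[Num.min/ enorm (g (w 0%N)) ^+ 2]_(t < T) (enorm (g (w t)) ^+ 2)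
    <= (emp_loss f ell D (w 0%N) - emp_loss f ell D (w T)) /
       (T%:R * eta * (1 - beta * eta / 2 - beta * rho * zeta)).
Proof.
move=> gr bpos sm epos rpos hr he hw Tpos; cbv zeta.
set zeta := T%:R^-1 * _.
set L := emp_loss f ell D.
pose N t := dotv (g (w t)) (g (w t)).
pose c t := 1 - beta * eta / 2 - beta * rho * (xi t)%:R.
have stp : forall t, L (w t.+1) <= L (w t) - eta * c t * N t.
  by move=> t; rewrite hw; apply: step.
have sum : forall k, \sum_(t < k) eta * c t * N t <= L (w 0%N) - L (w k).
  elim=> [|k IH]; first by rewrite big_ord0 subrr.
  rewrite big_ord_recr /=.
  have := stp k; lra.
have bne : beta != 0 by rewrite gt_eqF.
have r2 : beta * rho < 2^-1.
  have : beta * rho < beta * (2 * beta)^-1 by rewrite ltr_pM2l.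
  by rewrite invfM mulrCA mulfV ?mulr1.
have a1 : beta * eta < 1.
  have : beta * eta < beta * beta^-1 by rewrite ltr_pM2l.
  by rewrite mulfV.
have cpos : forall t, 0 < eta * c t.
  move=> t; apply: mulr_gt0 => //; rewrite /c; case: (xi t) => /=; lra.
have den : T%:R * eta * (1 - beta * eta / 2 - beta * rho * zeta) = \sum_(t < T) eta * c t.
  rewrite -mulr_sumr /c !sumrB !sumr_const card_ord -mulr_sumr /zeta.
  have Tn : (T%:R : R) != 0 by rewrite pnatr_eq0 -lt0n.
  field.
  by [].
have Spos : forall k, (0 < k)%N -> 0 < \sum_(t < k) eta * c t.
  case=> // k _; rewrite big_ord_recl /=.
  apply: (lt_le_trans (cpos 0%N)); rewrite lerDl.
  by apply: sumr_ge0 => i _; apply: ltW.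
rewrite den ler_pdivlMr ?Spos //.
apply: le_trans (sum T).
rewrite mulr_sumr; apply: ler_sum => t _.
rewrite mulrC ler_pM2l ?cpos //.
have -> : N t = enorm (g (w t)) ^+ 2 by rewrite enorm_sqr.
exact: bigmin_le.
Qed.
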